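(* Let $\mathcal{A}$ be an order--invariant oblivious streaming algorithm that, for any $\epsilon\in(0,1)$ and $\delta\in(0,1)$, uses $M(\epsilon,\delta)$ space and, on any fixed stream of at most $m$ updates, outputs a correct solution to the $(f,\epsilon)$--estimation problem with probability at least $1-\delta$, where $f$ has range contained in $\{0\}\cup[1,\alpha]$ for an integer $\alpha\ge2$. Then for any $\epsilon\in(0,1)$, any $\delta\in(0,1/10)$ and any $k\ge0$, there is a robust streaming algorithm for the $(f,\epsilon)$--estimation problem in the Bounded--Memory Adversary Model with $k$ bits of persistent memory that succeeds with probability at least $1-\delta$ and uses $M(\epsilon/3,1/10)\cdot O\!\left(2^k\cdot\frac{\log\alpha}{\epsilon}\cdot\log m+\log(1/\delta)\right)$ space.
   Context: Fix $n,m$ and $f:\mathbb{Z}^n\to\{0\}\cup[1,\alpha]$. For $x,y\ge0$, $y$ is a $(1+\epsilon)$--multiplicative approximation to $x$ if $x\le y<(1+\epsilon)x$; the $(f,\epsilon)$--estimation problem on $v\in\mathbb{Z}^n$ asks for such an approximation to $f(v)$. A stream of updates is a sequence $(i_j,\Delta_j)\in[n]\times\{-1,1\}$, accumulating into frequency vectors $v^{(j)}$ with $v^{(j)}_i=\sum_{j'\le j,\,i_{j'}=i}\Delta_{j'}$. An oblivious streaming algorithm is given $\epsilon$ and an upper bound $m$ on the stream length, processes $t\le m$ updates, and then outputs a solution to the $(f,\epsilon)$--estimation problem on $v^{(t)}$. Such an algorithm with random seed $\rho$ is order--invariant if for any two streams $S_1,S_2$ of length at most $m$ accumulating to the same frequency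 vector, and any seed $\rho$, its memory state after processing $S_1$ equals that after processing $S_2$. Bounded--Memory Adversary Model: a game of $m$ rounds between an Adversary and an Algorithm. The Adversary has a persistent memory of at most $k$ bits (read/write, retained across rounds), a read-only estimate memory containing the most recent estimate $y_{j-1}$ (empty in round 1), an unbounded working memory erased after each round, and fresh random bits each round that are discarded afterwards. In round $j$ the Adversary computes $(i_j,\Delta_j)$ as a function only of the fresh randomness, the persistent memory and the estimate memory (and may rewrite the persistent memory); the Algorithm receives the update and outputs $y_j$, which overwrites the estimate memory. The Algorithm succeeds if for every $j\in[m]$, $y_j$ is a $(1+\epsilon)$--multiplicative approximation to $f(v^{(j)})$. *)

(* Defs.v *)
From HB Require Import structures.
From mathcomp Require Import all_boot all_order all_algebra.
From mathcomp Require Import all_classical all_reals all_analysis.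

Import Order.TTheory GRing.Theory Num.Theory.
Local Open Scope ring_scope.

(* An update (i, Delta) in [n] x {-1,+1}; the boolean encodes the sign. *)
Notation update n := ('I_n * bool)%type.

Definition sgn (b : bool) : int := if b then 1 else -1.

Definition freq (n : nat) (s : seq (update n)) : {ffun 'I_n -> int} :=
  [ffun i => \sum_(u <- s | u.1 == i) sgn u.2].
Arguments freq {n} s.

Definition approx (R : realType) (eps x y : R) : bool :=
  (x <= y) && (y < (1 + eps) * x).
Arguments approx {R} eps x y.

Definition is_dist (R : realType) (T : finType) (p : T -> R) : Prop :=
  (forall t, 0 <= p t) /\ \sum_(t : T) p t = 1.
Arguments is_dist {R T} p.

(* A randomized streaming algorithm: a random seed drawn from [seed_dist],
   a memory state (the space used is the number of bits of the state type),
   deterministic given the seed. *)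
Record salg (R : realType) (n : nat) := SAlg {
  seed : finType;
  state : finType;
  seed_dist : seed -> R;
  init : seed -> state;
  step : seed -> state -> update n -> state;
  output : seed -> state -> R }.

Arguments SAlg {R n}.
Arguments seed {R n}.
Arguments state {R n}.
Arguments seed_dist {R n}.
Arguments init {R n}.
Arguments step {R n}.
Arguments output {R n}.

Definition run (R : realType) (n : nat) (A : salg R n) (r : seed A)
  (s : seq (update n)) : state A := foldl (step A r) (init A r) s.
Arguments run {R n} A r s.

Definition uses_space (R : realType) (n : nat) (A : salg R n) (S : nat) : Prop :=
  (#|{: state A}| <= 2 ^ S)%N.
Arguments uses_space {R n} A S.

Definition prob (R : realType) (n : nat) (A : salg R n) (P : pred (seed A)) : R :=
  \sum_(r | P r) seed_dist A r.
Arguments prob {R n} A P.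

Definition order_invariant (R : realType) (n m : nat) (A : salg R n) : Prop :=
  forall (r : seed A) (s1 s2 : seq (update n)),
    (size s1 <= m)%N -> (size s2 <= m)%N -> freq s1 = freq s2 ->
    run A r s1 = run A r s2.
Arguments order_invariant {R n} m A.

Definition oblivious_correct (R : realType) (n m : nat)
  (f : {ffun 'I_n -> int} -> R) (eps delta : R) (A : salg R n) : Prop :=
  forall s : seq (update n), (size s <= m)%N ->
    1 - delta <= prob A (fun r => approx eps (f (freq s)) (output A r (run A r s))).
Arguments oblivious_correct {R n} m f eps delta A.

(* In each round it
   sees only its persistent memory and the estimate memory (None in round 1),
   uses fresh randomness, and outputs an update and new persistent memory:
   this is a (time-invariant) Markov kernel. *)
Record adversary (R : realType) (n k : nat) := Adv {
  mem0 : k.-tuple bool;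
  adv_step : k.-tuple bool -> option R -> (update n * k.-tuple bool)%type -> R }.

Arguments Adv {R n k}.
Arguments mem0 {R n k}.
Arguments adv_step {R n k}.

Definition valid_adversary (R : realType) (n k : nat) (E : adversary R n k) : Prop :=
  forall (mem : k.-tuple bool) (est : option R), is_dist (adv_step E mem est).
Arguments valid_adversary {R n k} E.

Fixpoint game_succ (R : realType) (n k : nat) (A : salg R n)
  (f : {ffun 'I_n -> int} -> R) (eps : R) (E : adversary R n k) (r : seed A)
  (rounds : nat) (hist : seq (update n)) (st : state A)
  (mem : k.-tuple bool) (est : option R) : R :=
  match rounds with
  | 0 => 1
  | rounds'.+1 =>
      \sum_(o : (update n * k.-tuple bool)%type)
        adv_step E mem est o *
        ((approx eps (f (freq (rcons hist o.1))) (output A r (step A r st o.1)))%:R *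
         game_succ R n k A f eps E r rounds' (rcons hist o.1) (step A r st o.1) o.2
                   (Some (output A r (step A r st o.1))))
  end.
Arguments game_succ {R n k} A f eps E r rounds hist st mem est.

Definition robust_success (R : realType) (n k m : nat) (A : salg R n)
  (f : {ffun 'I_n -> int} -> R) (eps : R) (E : adversary R n k) : R :=
  \sum_(r : seed A) seed_dist A r * game_succ A f eps E r m [::] (init A r) (mem0 E) None.
Arguments robust_success {R n k} m A f eps E.

Definition robust_correct (R : realType) (n m k : nat)
  (f : {ffun 'I_n -> int} -> R) (eps delta : R) (A : salg R n) : Prop :=
  forall E : adversary R n k, valid_adversary E ->
    1 - delta <= robust_success m A f eps E.
Arguments robust_correct {R n} m k f eps delta A.

(* Main.v *)
Require Import Defs.
From HB Require Import structures.
From mathcomp Require Import all_boot all_order all_algebra.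
From mathcomp Require Import all_classical all_reals all_analysis.
From mathcomp Require Import lra zify ring.
From Stdlib Require Import Lia.
Import Order.TTheory GRing.Theory Num.Theory.
Local Open Scope ring_scope.
Set Implicit Arguments.
Unset Strict Implicit.
Unset Printing Implicit Defensive.

Lemma inter_card (T : nat) (P Q : pred 'I_T) :
  (T < #|P| + #|Q|)%N -> exists j, P j && Q j.
Proof.
move=> H.
have H2 := cardUI P Q.
have H1 : (#|[predU P & Q]| <= T)%N by rewrite -[X in (_ <= X)%N]card_ord max_card.
have : (0 < #|[predI P & Q]|)%N.
  rewrite lt0n; apply/eqP => h0; move: H; rewrite -H2 h0 addn0 ltnNge.
  by rewrite H1.
by case/card_gt0P => j; rewrite inE => Hj; exists j.
Qed.

Lemma inter_card2 (T : nat) (P Q : pred 'I_T) :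
  (T < 2 * #|P|)%N -> (T < 2 * #|Q|)%N -> exists j, P j && Q j.
Proof. move=> h1 h2; apply: inter_card; lia. Qed.

Lemma inter_card3 (T : nat) (P Q : pred 'I_T) :
  (T < 2 * #|P|)%N -> ~~ (T < 2 * #|Q|)%N -> exists j, P j && ~~ Q j.
Proof.
move=> h1 h2.
case: (boolP [exists j, P j && ~~ Q j]) => [/existsP//|/existsPn H].
have : (#|P| <= #|Q|)%N.
  apply: subset_leq_card; apply/fintype.subsetP => j Pj.
  by have := H j; rewrite unfold_in in Pj; rewrite Pj /= negbK.
move: h1 h2; rewrite -ltnNge; lia.
Qed.

Section Alg.
Variables (R : realType) (n : nat) (A0 : salg R n) (T L : nat) (e' : R).

Definition rho : R := 1 + e'.
Definition sB : finType := {ffun 'I_T -> seed A0}.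
Definition stB : finType := {ffun 'I_T -> state A0}.
Definition distB (rr : sB) : R := \prod_j seed_dist A0 (rr j).
Definition initB (rr : sB) : stB := [ffun j => init A0 (rr j)].
Definition stepB (rr : sB) (st : stB) (u : update n) : stB :=
  [ffun j => step A0 (rr j) (st j) u].
Definition outs (rr : sB) (st : stB) (j : 'I_T) : R := output A0 (rr j) (st j).
Definition Pidx (o : 'I_T -> R) (i : nat) : bool :=
  (T < 2 * #|[pred j | (o j <= rho ^+ i)%R]|)%N.
Definition pidx (o : 'I_T -> R) : nat := minn (find (Pidx o) (iota 0 L.+1)) L.
Definition outidx rr st : 'I_L.+1 := inord (pidx (outs rr st)).
Definition outB rr st : R := rho ^+ outidx rr st.
Definition B : salg R n := SAlg sB stB distB initB stepB outB.

Lemma runB rr s : run B rr s = [ffun j => run A0 (rr j) s].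
Proof.
rewrite /run /=.
suff H : forall st : stB, foldl (stepB rr) st s = [ffun j => foldl (step A0 (rr j)) (st j) s].
  by rewrite H; apply/ffunP => j; rewrite !ffunE.
elim: s => [|u s IH] st /=; first by apply/ffunP => j; rewrite ffunE.
by rewrite IH; apply/ffunP => j; rewrite !ffunE.
Qed.

Lemma maj_ok (eps : R) (o : 'I_T -> R) fx :
  0 < eps -> 0 <= e' -> rho * rho <= 1 + eps -> 1 <= fx -> rho * fx <= rho ^+ L ->
  (T < 2 * #|[pred j | (Defs.approx e' fx (o j))%R]|)%N ->
  Defs.approx eps fx (rho ^+ pidx o).
Proof.
move=> eps0 e0 hrho fx1 hL hmaj.
have rho1 : 1 <= rho by rewrite /rho; lra.
have rho0 : 0 < rho by lra.
set G := [pred j | (Defs.approx e' fx (o j))%R].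
have PL : Pidx o L.
  rewrite /Pidx; apply: (leq_trans hmaj); rewrite leq_mul2l /=.
  apply: subset_leq_card; apply/fintype.subsetP => j; rewrite !inE /Defs.approx => /andP[_ h].
  by apply: ltW; apply: lt_le_trans hL; exact: h.
have hasP : has (Pidx o) (iota 0 L.+1) by apply/hasP; exists L; [rewrite mem_iota add0n ltnSn | exact: PL].
have i0L : (find (Pidx o) (iota 0 L.+1) < L.+1)%N.
  by rewrite -[X in (_ < X)%N](size_iota 0) -has_find.
have Pi0 : Pidx o (find (Pidx o) (iota 0 L.+1)).
  by have := nth_find 0 hasP; rewrite nth_iota.
have hp : pidx o = find (Pidx o) (iota 0 L.+1) by rewrite /pidx; apply/minn_idPl.
rewrite hp; move: Pi0 i0L (@before_find _ 0 (Pidx o) (iota 0 L.+1)).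
case: (find (Pidx o) (iota 0 L.+1)) => [|i] Pi0 i0L bef.
- have [j /andP[]] := inter_card2 hmaj Pi0.
  rewrite /G /= /Defs.approx => /andP[h1 h2] h3.
  rewrite expr0 (le_trans h1 h3) /=; nra.
- have nPi : ~~ Pidx o i by have := bef i (ltnSn i); rewrite nth_iota // ?add0n; lia.
  have [j /andP[]] := inter_card2 hmaj Pi0.
  rewrite /G /= /Defs.approx => /andP[h1 _] h3.
  rewrite (le_trans h1 h3) /=.
  have [j' /andP[]] := inter_card3 hmaj nPi.
  rewrite /G /= /Defs.approx => /andP[_ h2]; rewrite -ltNge => h4.
  rewrite exprS.
  have : rho * rho ^+ i < rho * (rho * fx) by rewrite ltr_pM2l //; apply: lt_trans h2.
  move=> h5; apply: lt_le_trans h5 _; rewrite mulrA; apply: ler_wpM2r; lra.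
Qed.
End Alg.

Section Prob.
Variables (R : realType) (n : nat) (A0 : salg R n) (T : nat).

Lemma prob_fail (g : seed A0 -> bool) :
  (forall r, 0 <= seed_dist A0 r) -> \sum_r seed_dist A0 r = 1 ->
  \sum_(r | ~~ g r) seed_dist A0 r <= 1/10 ->
  \sum_(rr : sB A0 T) distB rr * (~~ (T < 2 * #|[pred j | g (rr j)]|)%N)%:R
    <= (13/20) ^+ T.
Proof.
move=> p0 p1 pbad.
set h := fun r => if g r then (1:R) else 4.
have hpos : forall r, 0 <= h r by move=> r; rewrite /h; case: (g r) => //; lra.
have pw : forall rr : sB A0 T,
    (~~ (T < 2 * #|[pred j | g (rr j)]|)%N)%:R <= (\prod_j h (rr j)) / 2 ^+ T.
  move=> rr; case: ltnP => /= hm; first by apply: divr_ge0; [apply: prodr_ge0 | apply: exprn_ge0].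
  rewrite ler_pdivlMr ?exprn_gt0 // mul1r.
  have -> : \prod_j h (rr j) = \prod_(j | ~~ g (rr j)) (4:R).
    by rewrite [RHS]big_mkcond /=; apply: eq_bigr => j _; rewrite /h; case: (g (rr j)).
  rewrite prodr_const.
  have hc := cardC [pred j | g (rr j)]; rewrite card_ord in hc.
  have -> : (4:R) = 2 ^+ 2 by rewrite expr2; lra.
  rewrite -exprM; apply: ler_weXn2l; first lra.
  have -> : #|(fun i : 'I_T => ~~ g (rr i))| = #|[predC [pred j | g (rr j)]]|.
    by apply: eq_card => j; rewrite !inE.
  move: (#|[pred j | g (rr j)]|) (#|[predC [pred j | g (rr j)]]|) hc hm => a c; lia.
apply: (le_trans (y := \sum_(rr : sB A0 T) distB rr * ((\prod_j h (rr j)) / 2 ^+ T))).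
  apply: ler_sum => rr _; apply: ler_wpM2l => //; rewrite /distB; exact: prodr_ge0.
under eq_bigr => rr _ do rewrite mulrA.
rewrite -mulr_suml.
have -> : \sum_(rr : sB A0 T) distB rr * \prod_j h (rr j) = \prod_(j < T) \sum_r (seed_dist A0 r * h r).
  rewrite bigA_distr_bigA /=; apply: eq_bigr => rr _; by rewrite /distB big_split.
have hs : \sum_r (seed_dist A0 r * h r) <= 13/10.
  have -> : \sum_r (seed_dist A0 r * h r) = \sum_r seed_dist A0 r + 3 * \sum_(r | ~~ g r) seed_dist A0 r.
    rewrite mulr_sumr [X in _ = _ + X]big_mkcond -big_split /=; apply: eq_bigr => r _.
    rewrite /h; case: (g r) => /=; lra.
  rewrite p1; lra.
have : \prod_(j < T) \sum_r (seed_dist A0 r * h r) <= (13/10) ^+ T.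
  have -> : (13/10:R) ^+ T = \prod_(j < T) (13/10:R) by rewrite prodr_const card_ord.
  apply: ler_prod => j _.
  by rewrite hs sumr_ge0 // => r _; apply: mulr_ge0.
move=> hp; rewrite ler_pdivrMr ?exprn_gt0 //; apply: (le_trans hp).
by rewrite -exprMn; apply: lerXn2r; rewrite ?nnegrE; lra.
Qed.
End Prob.

Section Indep.
Variables (R : realType) (X O : finType) (K : X -> O -> R).

Lemma prod_sum1 : (forall x, \sum_o K x o = 1) ->
  \sum_(w : {ffun X -> O}) \prod_x K x (w x) = 1.
Proof. by move=> hK; rewrite -bigA_distr_bigA big1 // => x _; exact: hK. Qed.

Lemma prod_ge0 : (forall x o, 0 <= K x o) -> forall w : {ffun X -> O}, 0 <= \prod_x K x (w x).
Proof. by move=> hK w; apply: prodr_ge0 => x _. Qed.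

Lemma indep (x0 : X) (o : O) (F : {ffun X -> O} -> R) :
  \sum_o' K x0 o' = 1 ->
  (forall w w' : {ffun X -> O}, (forall x, x != x0 -> w x = w' x) -> F w = F w') ->
  \sum_(w : {ffun X -> O} | w x0 == o) (\prod_x K x (w x)) * F w
    = K x0 o * \sum_(w : {ffun X -> O}) (\prod_x K x (w x)) * F w.
Proof.
move=> hK hF.
set G := fun o' => \sum_(w : {ffun X -> O} | w x0 == o') (\prod_(x | x != x0) K x (w x)) * F w.
have E1 : forall o', \sum_(w : {ffun X -> O} | w x0 == o') (\prod_x K x (w x)) * F w = K x0 o' * G o'.
  move=> o'; rewrite /G mulr_sumr; apply: eq_bigr => w /eqP wx0.
  by rewrite (bigD1 x0) //= wx0 mulrA.
have E2 : forall o', G o' = G o.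
  move=> o'; rewrite /G.
  pose upd := fun (w : {ffun X -> O}) (v : O) => [ffun x => if x == x0 then v else w x].
  rewrite (reindex_onto (fun w => upd w o') (fun w => upd w o)) /=.
  - apply: eq_big => w.
    + rewrite /upd !ffunE eqxx eqxx /=; apply/eqP/eqP => [E|E].
        by move/ffunP: E => /(_ x0); rewrite !ffunE eqxx => ->.
      apply/ffunP => x; rewrite !ffunE; case: eqP => [->|_] //.
    + move=> _; congr (_ * _).
        by apply: eq_bigr => x hx; rewrite /upd ffunE (negbTE hx).
      by apply: hF => x hx; rewrite /upd ffunE (negbTE hx).
  - move=> w /eqP wx0; apply/ffunP => x; rewrite /upd !ffunE; case: eqP => // ->.
    by rewrite wx0.
have E3 : \sum_(w : {ffun X -> O}) (\prod_x K x (w x)) * F w = G o.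
  rewrite (partition_big (fun w : {ffun X -> O} => w x0) predT) //=.
  under eq_bigr => o' _ do rewrite E1 E2.
  by rewrite -mulr_suml hK mul1r.
by rewrite E1 E3.
Qed.
End Indep.

Lemma freq_perm (n : nat) (s1 s2 : seq (update n)) : perm_eq s1 s2 -> freq s1 = freq s2.
Proof. by move=> h; apply/ffunP => i; rewrite !ffunE (perm_big _ h). Qed.

Section Game.
Variables (R : realType) (n k mm : nat) (A0 : salg R n) (T L : nat) (e' eps : R).
Variables (f : {ffun 'I_n -> int} -> R) (E : adversary R n k).

Local Notation m := mm.+1.
Definition Cfg : finType := (k.-tuple bool * option 'I_L.+1)%type.
Definition Ob : finType := (update n * k.-tuple bool)%type.
Definition Xw : finType := (Cfg * 'I_m)%type.
Definition gval (i : 'I_L.+1) : R := rho e' ^+ i.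
Definition Kc (c : Cfg) (o : Ob) : R := adv_step E c.1 (omap gval c.2) o.
Definition Kx (x : Xw) (o : Ob) : R := Kc x.1 o.
Definition PW (w : {ffun Xw -> Ob}) : R := \prod_x Kx x (w x).
Definition sample (w : {ffun Xw -> Ob}) (c : Cfg) (i : nat) : Ob := w (c, inord i).
Definition tinc (t : Cfg -> nat) (c : Cfg) : Cfg -> nat := fun c' => (t c' + (c' == c))%N.
Local Notation BB := (B A0 T L e').

Fixpoint play (rr : sB A0 T) (w : {ffun Xw -> Ob}) (j : nat) (t : Cfg -> nat)
  (hist : seq (update n)) (st : stB A0 T) (c : Cfg) : bool :=
  match j with
  | 0 => true
  | j'.+1 =>
    let o := sample w c (t c) in
    let st' := stepB rr st o.1 in
    Defs.approx eps (f (freq (rcons hist o.1))) (outB L e' rr st') &&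
    play rr w j' (tinc t c) (rcons hist o.1) st' (o.2, Some (outidx L e' rr st'))
  end.

Lemma play_indep rr j : forall t hist st c (w w' : {ffun Xw -> Ob}),
  (forall c' (i : 'I_m), (t c' <= i)%N -> w (c', i) = w' (c', i)) ->
  (forall c', t c' + j <= m)%N ->
  play rr w j t hist st c = play rr w' j t hist st c.
Proof.
elim: j => [//|j IH] t hist st c w w' hw hb /=.
have hs : sample w c (t c) = sample w' c (t c).
  rewrite /sample; apply: hw; rewrite inordK //; have := hb c; lia.
rewrite hs; congr (_ && _); apply: IH.
  move=> c' i hi; apply: hw; rewrite /tinc in hi; lia.
move=> c'; have := hb c'; rewrite /tinc; case: (c' == c) => /=; lia.
Qed.

Hypothesis Evalid : valid_adversary E.

Lemma Kx_sum x : \sum_o Kx x o = 1.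
Proof. by case: (Evalid x.1.1 (omap gval x.1.2)). Qed.
Lemma Kx_ge0 x o : 0 <= Kx x o.
Proof. by case: (Evalid x.1.1 (omap gval x.1.2)) => h _; apply: h. Qed.

Lemma coupling rr j : forall t hist st c,
  (forall c', t c' + j <= m)%N ->
  game_succ BB f eps E rr j hist st c.1 (omap gval c.2)
    = \sum_w PW w * (play rr w j t hist st c)%:R.
Proof.
elim: j => [|j IH] t hist st c hb.
  rewrite /=; under eq_bigr => w _ do rewrite mulr1.
  by rewrite /PW prod_sum1 // => x; exact: Kx_sum.
rewrite [LHS]/=.
set x0 : Xw := (c, inord (t c)).
pose ev (w : {ffun Xw -> Ob}) : Ob := w x0.
rewrite (partition_big ev predT) //=.
apply: eq_bigr => o _.
have hb' : forall c', (tinc t c c' + j <= m)%N.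
  by move=> c'; have := hb c'; rewrite /tinc; case: (c' == c) => /=; lia.
rewrite (IH (tinc t c) _ _ (o.2, Some (outidx L e' rr (stepB rr st o.1)))) //.
transitivity (\sum_(w : {ffun Xw -> Ob} | w x0 == o) PW w *
   ((Defs.approx eps (f (freq (rcons hist o.1))) (outB L e' rr (stepB rr st o.1)))%:R *
    (play rr w j (tinc t c) (rcons hist o.1) (stepB rr st o.1)
       (o.2, Some (outidx L e' rr (stepB rr st o.1))))%:R)); last first.
  apply: eq_bigr => w /eqP hw; rewrite -natrM mulnb /=.
  by rewrite /sample -/x0 hw.
rewrite /PW indep; first last.
- move=> w w' hw; congr (_ * (_ %:R)); congr nat_of_bool; eapply play_indep; [|exact: hb'].
  move=> c' i hi; apply: hw; apply/negP => /eqP [h1 h2].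
  subst c'; move: hi; rewrite /tinc eqxx h2 inordK; first lia.
  by have := hb c; lia.
- exact: Kx_sum.
rewrite /Kx /=; congr (_ * _).
rewrite mulr_sumr; apply: eq_bigr => w _; by rewrite mulrCA.
Qed.
End Game.

Section Game2.
Variables (R : realType) (n k mm : nat) (A0 : salg R n) (T L : nat) (e' eps : R).
Variables (f : {ffun 'I_n -> int} -> R) (E : adversary R n k).
Local Notation m := mm.+1.
Local Notation BB := (B A0 T L e').
Local Notation Cfg := (Cfg k L).
Local Notation Xw := (Xw k mm L).
Local Notation Ob := (Ob n k).
Local Notation sample := (@sample n k mm L).
Local Notation play := (@play R n k mm A0 T L e' eps f).

Definition block (w : {ffun Xw -> Ob}) (c : Cfg) (nn : nat) : seq (update n) :=
  [seq (sample w c i).1 | i <- iota 0 nn].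
Definition Sw (w : {ffun Xw -> Ob}) (t : Cfg -> nat) : seq (update n) :=
  flatten [seq block w c (t c) | c <- enum Cfg].
Definition majgood (rr : sB A0 T) (s : seq (update n)) : bool :=
  (T < 2 * #|[pred j | (Defs.approx e' (f (freq s)) (output A0 (rr j) (run A0 (rr j) s)))%R]|)%N.
Definition Good (rr : sB A0 T) (w : {ffun Xw -> Ob}) : bool :=
  [forall tt : {ffun Cfg -> 'I_m.+1},
     ((\sum_(c <- enum Cfg) (tt c : nat)) <= m)%N ==> majgood rr (Sw w (fun c => tt c))].

Lemma count_S w t a : count a (Sw w t) = (\sum_(c <- enum Cfg) count a (block w c (t c)))%N.
Proof. by rewrite /Sw count_flatten -map_comp sumnE big_map. Qed.

Lemma size_S w t : size (Sw w t) = (\sum_(c <- enum Cfg) t c)%N.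
Proof.
rewrite -count_predT count_S; apply: eq_bigr => c _.
by rewrite count_predT size_map size_iota.
Qed.

Lemma term_le (t : Cfg -> nat) c : (t c <= \sum_(c' <- enum Cfg) t c')%N.
Proof. by rewrite (bigD1_seq c) ?mem_enum ?enum_uniq //= leq_addr. Qed.

Lemma sum_tinc (t : Cfg -> nat) c :
  (\sum_(c' <- enum Cfg) tinc t c c' = (\sum_(c' <- enum Cfg) t c') + 1)%N.
Proof.
rewrite /tinc big_split /=; congr (_ + _)%N.
rewrite (bigD1_seq c) ?mem_enum ?enum_uniq //= eqxx big1 // => c' /negbTE ->.
by [].
Qed.

Lemma perm_S w t c :
  perm_eq (rcons (Sw w t) (sample w c (t c)).1) (Sw w (tinc t c)).
Proof.
apply/permP => a; rewrite -cats1 count_cat !count_S /=.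
rewrite (bigD1_seq c) ?mem_enum ?enum_uniq //=.
rewrite [in RHS](bigD1_seq c) ?mem_enum ?enum_uniq //=.
have -> : (\sum_(i <- enum Cfg | i != c) count a (block w i (tinc t c i)) =
           \sum_(i <- enum Cfg | i != c) count a (block w i (t i)))%N.
  by apply: eq_bigr => c' /negbTE h; rewrite /tinc h addn0.
rewrite /tinc eqxx /block iotaD map_cat count_cat /= add0n.
move: (count a _) (\sum_(i <- _ | _) _)%N => x y; lia.
Qed.

Hypotheses (p0 : forall r, 0 <= seed_dist A0 r) (p1 : \sum_r seed_dist A0 r = 1).
Hypothesis Hinv : order_invariant m A0.
Hypothesis Hobl : oblivious_correct m f e' (1/10) A0.
Hypothesis Hf1 : forall s, (size s <= m)%N -> 1 <= f (freq s).
Hypothesis HL : forall s, (size s <= m)%N -> rho e' * f (freq s) <= rho e' ^+ L.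
Hypotheses (eps0 : 0 < eps) (e0 : 0 <= e') (hrho : rho e' * rho e' <= 1 + eps).

Lemma outB_run rr s : (size s <= m)%N -> majgood rr s ->
  Defs.approx eps (f (freq s)) (outB L e' rr (run BB rr s)).
Proof.
move=> hs hm; rewrite /outB /outidx inordK; last by rewrite ltnS /pidx geq_minr.
apply: maj_ok => //; [exact: Hf1 | exact: HL |].
move: hm; rewrite /majgood; congr (_ < _ * _)%N; apply: eq_card => j.
by rewrite !inE /outs runB ffunE.
Qed.

Lemma play_good rr w j : Good rr w -> forall t hist st c,
  ((\sum_(c' <- enum Cfg) t c') + j <= m)%N -> perm_eq hist (Sw w t) ->
  st = run BB rr hist -> play rr w j t hist st c.
Proof.
move=> hG; elim: j => [//|j IH] t hist st c hb hp hst /=.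
set o := sample w c (t c).
have hp' : perm_eq (rcons hist o.1) (Sw w (tinc t c)).
  apply: perm_trans (perm_S w t c); by rewrite -!cats1 perm_cat2r.
have hst' : stepB rr st o.1 = run BB rr (rcons hist o.1) by rewrite hst /run foldl_rcons.
have hsz : (\sum_(c' <- enum Cfg) tinc t c c' <= m)%N by rewrite sum_tinc; lia.
have hsz1 : (size (Sw w (tinc t c)) <= m)%N by rewrite size_S.
have hsz2 : (size (rcons hist o.1) <= m)%N by rewrite (perm_size hp').
apply/andP; split; last by apply: IH => //; rewrite sum_tinc; lia.
have -> : stepB rr st o.1 = run BB rr (Sw w (tinc t c)).
  rewrite hst' !runB; apply/ffunP => jj; rewrite !ffunE; apply: Hinv => //.
  exact: freq_perm.
rewrite (freq_perm hp'); apply: outB_run => //.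
have := forallP hG [ffun c' => inord (tinc t c c')].
have heq : forall c', ([ffun c' => (inord (tinc t c c') : 'I_m.+1)] c' : nat) = tinc t c c'.
  move=> c'; rewrite ffunE inordK // ltnS; apply: leq_trans hsz; exact: term_le.
have -> : (\sum_(c0 <- enum Cfg) ([ffun c' => (inord (tinc t c c') : 'I_m.+1)] c0 : nat))%N
          = (\sum_(c0 <- enum Cfg) tinc t c c0)%N by apply: eq_bigr => c' _; rewrite heq.
rewrite hsz /=.
suff -> : Sw w (fun c0 => [ffun c' => (inord (tinc t c c') : 'I_m.+1)] c0) = Sw w (tinc t c) by [].
by rewrite /Sw; congr flatten; apply: eq_map => c'; rewrite heq.
Qed.

End Game2.

Section Game3.
Variables (R : realType) (n k mm : nat) (A0 : salg R n) (T L : nat) (e' eps : R).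
Variables (f : {ffun 'I_n -> int} -> R) (E : adversary R n k).
Local Notation m := mm.+1.
Local Notation BB := (B A0 T L e').
Local Notation Cfg := (Cfg k L).
Local Notation Xw := (Xw k mm L).
Local Notation Ob := (Ob n k).
Local Notation sample := (@sample n k mm L).
Local Notation play := (@play R n k mm A0 T L e' eps f).

Hypotheses (p0 : forall r, 0 <= seed_dist A0 r) (p1 : \sum_r seed_dist A0 r = 1).
Hypothesis Hinv : order_invariant m A0.
Hypothesis Hobl : oblivious_correct m f e' (1/10) A0.
Hypothesis Hf1 : forall s, (size s <= m)%N -> 1 <= f (freq s).
Hypothesis HL : forall s, (size s <= m)%N -> rho e' * f (freq s) <= rho e' ^+ L.
Hypotheses (eps0 : 0 < eps) (e0 : 0 <= e') (hrho : rho e' * rho e' <= 1 + eps).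
Hypothesis Evalid : valid_adversary E.

Lemma distB_ge0 (rr : sB A0 T) : 0 <= distB rr.
Proof. by apply: prodr_ge0. Qed.

Lemma distB_sum : \sum_(rr : sB A0 T) distB rr = 1.
Proof. exact: (@prod_sum1 R 'I_T (seed A0) (fun _ r => seed_dist A0 r)). Qed.

Lemma PW_ge0 (w : {ffun Xw -> Ob}) : 0 <= PW e' E w.
Proof. by apply: prodr_ge0 => x _; apply: Kx_ge0. Qed.

Lemma PW_sum : \sum_(w : {ffun Xw -> Ob}) PW e' E w = 1.
Proof. by apply: prod_sum1 => x; apply: Kx_sum. Qed.

Lemma robust_gen (G : sB A0 T -> {ffun Xw -> Ob} -> bool) (beta : R) :
  (forall rr w, G rr w -> play rr w m (fun _ => 0%N) [::] (initB rr) (mem0 E, None)) ->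
  (forall w, \sum_(rr : sB A0 T) distB rr * (~~ G rr w)%:R <= beta) ->
  1 - beta <= robust_success m BB f eps E.
Proof.
move=> hG hb; rewrite /robust_success.
have hc : forall rr, game_succ BB f eps E rr m [::] (init BB rr) (mem0 E) None =
    \sum_w PW e' E w * (play rr w m (fun _ => 0%N) [::] (initB rr) (mem0 E, None))%:R.
  by move=> rr; rewrite -(coupling eps f Evalid rr [::] (initB rr) (mem0 E, None)).
under eq_bigr => rr _ do rewrite hc.
apply: (le_trans (y := \sum_(rr : sB A0 T) distB rr * \sum_w PW e' E w * (G rr w)%:R)).
  have -> : \sum_(rr : sB A0 T) distB rr * \sum_w PW e' E w * (G rr w)%:R
      = \sum_w PW e' E w * \sum_(rr : sB A0 T) distB rr * (G rr w)%:R.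
    rewrite (eq_bigr (fun rr => \sum_w distB rr * (PW e' E w * (G rr w)%:R))); last first.
      by move=> rr _; rewrite mulr_sumr.
    rewrite exchange_big /=; apply: eq_bigr => w _; rewrite mulr_sumr; apply: eq_bigr => rr _.
    by rewrite mulrCA.
  apply: (le_trans (y := \sum_w PW e' E w * (1 - beta))); last first.
    apply: ler_sum => w _; apply: ler_wpM2l; first exact: PW_ge0.
    have : \sum_(rr : sB A0 T) distB rr * (G rr w)%:R =
           1 - \sum_(rr : sB A0 T) distB rr * (~~ G rr w)%:R.
      have : \sum_(rr : sB A0 T) distB rr * (G rr w)%:R +
             \sum_(rr : sB A0 T) distB rr * (~~ G rr w)%:R = 1.
        rewrite -big_split /= -[RHS]distB_sum; apply: eq_bigr => rr _.
        by case: (G rr w); rewrite /= ?mulr1n ?mulr0n ?mulr1 ?mulr0 ?addr0 ?add0r.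
      lra.
    move=> ->; have := hb w; lra.
  by rewrite -mulr_suml PW_sum mul1r.
apply: ler_sum => rr _; apply: ler_wpM2l; first exact: distB_ge0.
apply: ler_sum => w _; apply: ler_wpM2l; first exact: PW_ge0.
case hGw: (G rr w) => //; by rewrite (hG _ _ hGw).
Qed.

Lemma maj_fail s : (size s <= m)%N ->
  \sum_(rr : sB A0 T) distB rr * (~~ majgood e' f rr s)%:R <= (13/20) ^+ T.
Proof.
move=> hs.
pose g := fun r => Defs.approx e' (f (freq s)) (output A0 r (run A0 r s)).
apply: (@prob_fail R n A0 T g p0 p1).
have := Hobl hs; rewrite /prob -/g => h.
have h2 : \sum_r seed_dist A0 r = \sum_(r | g r) seed_dist A0 r + \sum_(r | ~~ g r) seed_dist A0 r by rewrite (bigID g).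
rewrite p1 in h2.
lra.
Qed.

Lemma good_bound (w : {ffun Xw -> Ob}) : \sum_(rr : sB A0 T) distB rr * (~~ Good e' f rr w)%:R
   <= (#|{ffun Cfg -> 'I_m.+1}|)%:R * (13/20) ^+ T.
Proof.
pose cnd := fun (rr : sB A0 T) (tt : {ffun Cfg -> 'I_m.+1}) =>
  ((\sum_(c <- enum Cfg) (tt c : nat)) <= m)%N && ~~ majgood e' f rr (Sw w (fun c => tt c)).
have step1 : \sum_(rr : sB A0 T) distB rr * (~~ Good e' f rr w)%:R <=
   \sum_(rr : sB A0 T) distB rr * \sum_(tt : {ffun Cfg -> 'I_m.+1}) (cnd rr tt)%:R.
  apply: ler_sum => rr _; apply: ler_wpM2l; first exact: distB_ge0.
  case hG: (Good e' f rr w) => /=; first by apply: sumr_ge0 => tt _.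
  move/negbT: hG => /forallPn [tt]; rewrite negb_imply => htt.
  rewrite (bigD1 tt) //= /cnd htt /=; rewrite lerDl; apply: sumr_ge0 => ? _.
  by [].
apply: le_trans step1 _.
rewrite (eq_bigr (fun rr => \sum_tt distB rr * (cnd rr tt)%:R)); last by move=> rr _; rewrite mulr_sumr.
rewrite exchange_big /=.
apply: (le_trans (y := \sum_(tt : {ffun Cfg -> 'I_m.+1}) (13/20:R) ^+ T)).
  apply: ler_sum => tt _; rewrite /cnd.
  case hc: (\sum_(c <- enum Cfg) (tt c : nat) <= m)%N => /=.
    by apply: maj_fail; rewrite size_S.
  rewrite big1 ?exprn_ge0 // => rr _; by rewrite mulr0.
by rewrite sumr_const [X in _ <= X]mulrC mulr_natr.
Qed.

Lemma good_play rr w : Good e' f rr w ->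
  play rr w m (fun _ => 0%N) [::] (initB rr) (mem0 E, None).
Proof.
move=> hG; apply: (play_good Hinv Hf1 HL eps0 e0 hrho) => //.
- by rewrite big1.
- by apply/permP => a; rewrite count_S big1.
Qed.

Lemma robust_main :
  1 - (#|{ffun Cfg -> 'I_m.+1}|)%:R * (13/20) ^+ T <= robust_success m BB f eps E.
Proof.
apply: (robust_gen (G := Good e' f)); first exact: good_play.
exact: good_bound.
Qed.

Lemma play1 rr (w : {ffun Xw -> Ob}) :
  majgood e' f rr [:: (sample w (mem0 E, None) 0).1] ->
  play rr w 1 (fun _ => 0%N) [::] (initB rr) (mem0 E, None).
Proof.
move=> h; rewrite /= andbT.
exact: (outB_run Hf1 HL eps0 e0 hrho (s := [:: _])).
Qed.

Lemma bound1 (w : {ffun Xw -> Ob}) :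
  \sum_(rr : sB A0 T) distB rr * (~~ majgood e' f rr [:: (sample w (mem0 E, None) 0).1])%:R
   <= (13/20) ^+ T.
Proof. exact: maj_fail. Qed.

End Game3.

Lemma robust_one (R : realType) (n k : nat) (A0 : salg R n) (T L : nat) (e' eps : R)
  (f : {ffun 'I_n -> int} -> R) (E : adversary R n k) :
  (forall r, 0 <= seed_dist A0 r) -> \sum_r seed_dist A0 r = 1 ->
  order_invariant 1 A0 -> oblivious_correct 1 f e' (1/10) A0 ->
  (forall s, (size s <= 1)%N -> 1 <= f (freq s)) ->
  (forall s, (size s <= 1)%N -> rho e' * f (freq s) <= rho e' ^+ L) ->
  0 < eps -> 0 <= e' -> rho e' * rho e' <= 1 + eps -> valid_adversary E ->
  1 - (13/20) ^+ T <= robust_success 1 (B A0 T L e') f eps E.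
Proof.
move=> p0 p1 Hinv Hobl Hf1 HL eps0 e0 hrho Ev.
apply: (@robust_gen R n k 0 A0 T L e' eps f E p0 p1 Ev
   (fun rr w => majgood e' f rr [:: (@sample n k 0 L w (mem0 E, None) 0).1])).
- move=> rr w; exact: (play1 Hf1 HL eps0 e0 hrho).
- move=> w; exact: (bound1 T E p0 p1 Hobl).
Qed.

Section Num.
Variable R : realType.

Lemma bern (x : R) i : 0 <= x -> 1 + i%:R * x <= (1 + x) ^+ i.
Proof.
move=> x0; elim: i => [|i IH]; first by rewrite expr0 mul0r addr0.
rewrite exprS -natr1 mulrDl mul1r.
have h1 : 0 <= i%:R * x by apply: mulr_ge0.
have h2 : (1 + x) * (1 + i%:R * x) <= (1 + x) * (1 + x) ^+ i.
  by apply: ler_wpM2l => //; lra.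
apply: le_trans h2; nra.
Qed.

Lemma ln2_gt0 : 0 < ln (2 : R).
Proof. by apply: ln_gt0; lra. Qed.

Lemma lnpow (x : R) t : 2 ^+ t <= x -> t%:R * ln (2:R) <= ln x.
Proof.
move=> h; have hx : 0 < x by apply: lt_le_trans h; apply: exprn_gt0; lra.
rewrite mulr_natl -lnXn; last lra.
by rewrite ler_ln // posrE exprn_gt0 //; lra.
Qed.

Lemma tlog_bound (p : nat) : (2 <= p)%N ->
  (trunc_log 2 p).+1%:R * ln (2:R) <= 2 * ln (p%:R : R).
Proof.
move=> hp.
have h1 : (2 ^ trunc_log 2 p <= p)%N by apply: trunc_logP => //; lia.
have h2 : (trunc_log 2 p)%:R * ln (2:R) <= ln (p%:R : R).
  apply: lnpow; rewrite -natrX ler_nat //.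
have h3 : ln (2:R) <= ln (p%:R : R).
  rewrite ler_ln ?posrE //; first by rewrite (ler_nat R 2 p).
  by rewrite ltr0n; lia.
rewrite -natr1 mulrDl mul1r; lra.
Qed.
End Num.

Lemma space_bound (R : realType) (MM N q k m alpha a' b : nat) (eps delta : R) :
  0 < eps -> eps < 1 -> 0 < delta -> delta < 1/10 -> (2 <= alpha)%N ->
  q%:R <= 3 / eps + 1 ->
  N = (2 ^ k * (q * (trunc_log 2 alpha).+1).+3)%N ->
  a' = (if (m <= 1)%N then 0%N else (trunc_log 2 m).+1) ->
  b = (trunc_log 2 (Num.truncn (1 / delta))).+1 ->
  (MM * (5 * (N * a' + b)))%N%:R <=
    (110 / ln (2:R) ^+ 2 + 10 / ln (2:R)) * MM%:R *
    (2 ^+ k * (ln alpha%:R / eps) * ln m%:R + ln (1 / delta)).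
Proof.
move=> eps0 eps1 d0 d1 halpha hq2 hN ha' hb'.
have l2p := @ln2_gt0 R.
set l2 := ln (2:R) in l2p *.
set Z := ln alpha%:R / eps.
set X := 2 ^+ k * Z * ln m%:R.
set Y := ln (1 / delta).
have hd : 10 < 1 / delta by rewrite ltr_pdivlMr //; lra.
have Y0 : l2 <= Y by rewrite /Y ler_ln ?posrE //; lra.
have lnA : l2 <= ln alpha%:R.
  by rewrite /l2 ler_ln ?posrE ?ltr0n //; [rewrite (ler_nat R 2 alpha) | lia].
have Z1 : ln alpha%:R <= Z.
  rewrite /Z ler_pdivlMr //; have : 0 <= ln (alpha%:R : R) by lra.
  move=> h; nra.
have lm0 : 0 <= ln (m%:R : R).
  case: (posnP m) => [->|mpos]; first by rewrite ln0.
  by apply: ln_ge0; rewrite ler1n.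
have X0 : 0 <= X.
  rewrite /X; apply: mulr_ge0 => //; apply: mulr_ge0; first by apply: exprn_ge0.
  lra.
have Fb : b%:R * l2 <= 2 * Y.
  rewrite hb'.
  have ht : (2 <= Num.truncn (1 / delta))%N by rewrite truncn_ge_nat; lra.
  have h := tlog_bound R ht.
  have h2 : ln ((Num.truncn (1 / delta))%:R : R) <= Y.
    rewrite /Y ler_ln ?posrE; [by rewrite truncn_le; lra | | lra].
    by rewrite ltr0n; apply: leq_trans ht.
  rewrite /l2; lra.
have Fa : a'%:R * l2 <= 2 * ln (m%:R : R).
  rewrite ha'; case: ifP => hm; first by rewrite mul0r; lra.
  have hm2 : (2 <= m)%N by rewrite ltnNge hm.
  have := tlog_bound R hm2; rewrite /l2; lra.
have Fta := tlog_bound R halpha.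
have Fq : q%:R <= 4 / eps.
  have : 1 <= 1 / eps by rewrite ler_pdivlMr //; lra.
  have : 3 / eps + 1 / eps = 4 / eps by rewrite -mulrDl; congr (_ / _); lra.
  lra.
have FL : (q * (trunc_log 2 alpha).+1).+3%:R * l2 <= 11 * Z.
  rewrite -addn3 natrD natrM mulrDl -mulrA.
  have h1 : q%:R * ((trunc_log 2 alpha).+1%:R * l2) <= (4 / eps) * (2 * ln alpha%:R).
    apply: ler_pM => //; by apply: mulr_ge0 => //; lra.
  have h2 : (4 / eps) * (2 * ln alpha%:R) = 8 * Z by rewrite /Z; field; lra.
  have h3 : (3%:R : R) * l2 <= 3 * Z by lra.
  lra.
have FN : N%:R * a'%:R * l2 ^+ 2 <= 22 * X.
  rewrite hN natrM natrX expr2.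
  have -> : (2%:R:R) ^+ k * (q * (trunc_log 2 alpha).+1).+3%:R * a'%:R * (l2 * l2)
          = 2 ^+ k * (((q * (trunc_log 2 alpha).+1).+3%:R * l2) * (a'%:R * l2)) by ring.
  have -> : 22 * X = 2 ^+ k * ((11 * Z) * (2 * ln (m%:R : R))) by rewrite /X; ring.
  apply: ler_wpM2l; first by apply: exprn_ge0.
  apply: ler_pM => //; apply: mulr_ge0 => //; lra.
have FT : (5 * (N * a' + b))%N%:R * l2 ^+ 2 <= 110 * X + 10 * l2 * Y.
  rewrite natrM natrD natrM.
  have : 5%:R * (b%:R * l2 ^+ 2) <= 10 * l2 * Y.
    rewrite expr2; have : b%:R * (l2 * l2) = (b%:R * l2) * l2 by ring.
    move=> ->; nra.
  move: FN; set u := N%:R * a'%:R * l2 ^+ 2; set v := b%:R * l2 ^+ 2.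
  have -> : 5%:R * (N%:R * a'%:R + b%:R) * l2 ^+ 2 = 5 * u + 5%:R * v by rewrite /u /v; ring.
  lra.
rewrite natrM -mulrA [_ * (MM%:R * _)]mulrCA; apply: ler_wpM2l => //.
set TT := (5 * (N * a' + b))%N%:R in FT *.
have l22 : 0 < l2 ^+ 2 by apply: exprn_gt0.
rewrite -(ler_pM2r l22).
have -> : (110 / l2 ^+ 2 + 10 / l2) * (X + Y) * l2 ^+ 2 = 110 * (X + Y) + 10 * l2 * (X + Y).
  by field; rewrite gt_eqF.
have : 0 <= l2 * X by apply: mulr_ge0 => //; lra.
nra.
Qed.

Lemma half_le (R : realType) (b : nat) (delta : R) : 0 < delta -> 1 / delta <= 2 ^+ b -> (1/2:R) ^+ b <= delta.
Proof.
move=> d0 hb.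
have hb' : 1 <= 2 ^+ b * delta by move: hb; rewrite ler_pdivrMr.
have h2 : (0:R) < 2 ^+ b by apply: exprn_gt0; lra.
rewrite div1r exprVn -[X in X <= _]div1r ler_pdivrMr //.
by rewrite mulrC.
Qed.
Lemma key_comb (R : realType) (U X H D : R) : 0 <= U -> U <= X -> 0 <= H -> X * H <= D -> U * H <= D.
Proof. move=> h0 h1 h2 h3; apply: le_trans h3; by apply: ler_wpM2r. Qed.

Lemma half_pow (R : realType) (x b : nat) : (2:R) ^+ x * (1/2) ^+ (x + b) = (1/2) ^+ b.
Proof.
rewrite exprD mulrA -exprMn.
have -> : (2:R) * (1/2) = 1 by lra.
by rewrite expr1n; exact: mul1r.
Qed.

Unset Implicit Arguments.

Theorem theorem6p4 (R : realType) :
  exists C : R,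
  forall (n m alpha : nat) (f : {ffun 'I_n -> int} -> R),
    (2 <= alpha)%N ->
    (forall v, f v = 0 \/ (1 <= f v <= alpha%:R)) ->
  forall (A : R -> R -> salg R n) (M : R -> R -> nat),
    (forall eps delta : R, 0 < eps < 1 -> 0 < delta < 1 ->
       [/\ is_dist (seed_dist (A eps delta)),
           uses_space (A eps delta) (M eps delta),
           order_invariant m (A eps delta)
         & oblivious_correct m f eps delta (A eps delta)]) ->
  forall (eps delta : R) (k : nat),
    0 < eps < 1 -> 0 < delta < 1 / 10 ->
    exists (B : salg R n) (S : nat),
      [/\ is_dist (seed_dist B),
          uses_space B S,
          S%:R <= C * (M (eps / 3) (1 / 10))%:R *
                  (2 ^+ k * (ln alpha%:R / eps) * ln m%:R + ln (1 / delta))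
        & robust_correct m k f eps delta B].
Proof.
have l2p := @ln2_gt0 R.
exists (110 / ln (2:R) ^+ 2 + 10 / ln (2:R)).
move=> n m alpha f halpha hf A M hA eps delta k /andP[eps0 eps1] /andP[d0 d1].
have e'01 : 0 < eps / 3 < 1 by apply/andP; split; lra.
have d01 : 0 < (1/10 : R) < 1 by apply/andP; split; lra.
have [[p0 p1] hsp hinv hobl] := hA (eps / 3) (1/10) e'01 d01.
set A0 := A (eps / 3) (1 / 10) in p0 p1 hsp hinv hobl *.
set MM := M (eps / 3) (1 / 10) in hsp *.
set e' := eps / 3 in A0 p0 p1 hsp hinv hobl e'01 *.
have e0 : 0 <= e' by rewrite /e'; lra.
have hrho : rho e' * rho e' <= 1 + eps by rewrite /rho /e'; nra.
have Hf : forall s, (size s <= m)%N -> 1 <= f (freq s) <= alpha%:R.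
  move=> s hs; case: (hf (freq s)) => [h0|//]; exfalso.
  have := hobl s hs; rewrite /prob h0 big_pred0; first lra.
  move=> r; apply/negbTE/negP => /andP[h1 h2]; lra.
have Hf1 : forall s, (size s <= m)%N -> 1 <= f (freq s) by move=> s /Hf /andP[].
set q := (Num.truncn (3 / eps)).+1.
have hq : 3 / eps < q%:R by exact: truncnS_gt.
have hq2 : q%:R <= 3 / eps + 1.
  rewrite /q -natr1 lerD2r truncn_le; apply: divr_ge0; lra.
set ta := (trunc_log 2 alpha).+1.
have hta : (alpha < 2 ^ ta)%N by apply: trunc_log_ltn.
set L := (q * ta).+1.
have HL : forall s, (size s <= m)%N -> rho e' * f (freq s) <= rho e' ^+ L.
  move=> s hs; have /andP[h1 h2] := Hf s hs.
  rewrite /L exprS; apply: ler_wpM2l; first by rewrite /rho; lra.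
  rewrite exprM.
  have hq' : 2 <= rho e' ^+ q.
    apply: le_trans (bern q e0); rewrite /e'.
    have : 1 <= q%:R * (eps / 3).
      have := hq; rewrite ltr_pdivrMr // => h; lra.
    lra.
  have : 2 ^+ ta <= (rho e' ^+ q) ^+ ta by apply: lerXn2r; rewrite ?nnegrE //; lra.
  have : alpha%:R <= (2:R) ^+ ta.
    by rewrite -natrX ler_nat; apply: ltnW.
  lra.
set b := (trunc_log 2 (Num.truncn (1 / delta))).+1.
have hb : 1 / delta <= 2 ^+ b.
  have h1 := truncnS_gt (1 / delta).
  have h2 : (Num.truncn (1 / delta) < 2 ^ b)%N by apply: trunc_log_ltn.
  apply: (le_trans (ltW h1)); rewrite -natrX ler_nat; exact: h2.
set N := #|{: Cfg k L}|.
have N0 : (0 < N)%N by apply/card_gt0P; exists (mktuple (fun _ : 'I_k => false), None).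
set a' := if (m <= 1)%N then 0%N else (trunc_log 2 m).+1.
set T := (5 * (N * a' + b))%N.
have key : forall U : nat, (U <= 2 ^ (N * a'))%N -> U%:R * (13/20 : R) ^+ T <= delta.
  move=> U hU.
  set K := (N * a' + b)%N.
  have h1 : (13/20:R) ^+ T <= (1/2) ^+ K.
    by rewrite /T exprM; apply: lerXn2r; rewrite ?nnegrE; try lra.
  have h2 : U%:R <= (2:R) ^+ (N * a') by rewrite -natrX ler_nat.
  have h3 : (2:R) ^+ (N * a') * (1/2) ^+ K = (1/2) ^+ b by exact: half_pow.
  have h4 := half_le d0 hb.
  apply: (le_trans (y := (1/2:R) ^+ b)); last exact: h4.
  rewrite -h3.
  apply: (le_trans (y := U%:R * (1/2) ^+ K)); first by apply: ler_wpM2l.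
  apply: ler_wpM2r => //; apply: exprn_ge0; lra.
exists (B A0 T L e'), (MM * T)%N; split.
- split; first by move=> rr; apply: prodr_ge0.
  exact: distB_sum.
- rewrite /uses_space.
  change (#|{ffun 'I_T -> state A0}| <= 2 ^ (MM * T))%N.
  rewrite card_ffun card_ord expnM leq_exp2r //.
  by rewrite /T /b addnS.
- have hN : N = (2 ^ k * (q * ta).+3)%N.
    by rewrite /N card_prod card_tuple card_bool card_option card_ord.
  exact: (@space_bound R MM N q k m alpha a' b eps delta eps0 eps1 d0 d1 halpha hq2 hN erefl erefl).
move=> E Ev.
have [m0|[m1|[mm hmm]]] : m = 0%N \/ m = 1%N \/ exists mm, m = mm.+2.
  by case: (m) => [|[|mm]]; [left|right;left|right;right;exists mm].
all: subst m.
- rewrite /robust_success /=; under eq_bigr do rewrite mulr1.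
  rewrite distB_sum //; lra.
- have hr := @robust_one R n k A0 T L e' eps f E p0 p1 hinv hobl Hf1 HL eps0 e0 hrho Ev.
  have h1 : (1 <= 2 ^ (N * a'))%N by rewrite expn_gt0.
  have := key 1%N h1; rewrite mul1r => h2.
  apply: le_trans hr; by rewrite lerD2l lerN2.
- have hr := robust_main T p0 p1 hinv hobl Hf1 HL eps0 e0 hrho Ev.
  have ha : a' = (trunc_log 2 mm.+2).+1 by [].
  have h1 : (#|{ffun Cfg k L -> 'I_mm.+3}| <= 2 ^ (N * a'))%N.
    rewrite card_ffun card_ord mulnC expnM leq_exp2r // ha.
    exact: trunc_log_ltn.
  have h2 := key _ h1.
  apply: le_trans hr; by rewrite lerD2l lerN2.
Qed.
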